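(* Let $\Gamma$ be a finite connected $(G,s)$-geodesic-transitive graph with $s\ge2$ and $G\le\mathrm{Aut}(\Gamma)$. Let $1\ne N\trianglelefteq G$ be intransitive on $V(\Gamma)$. Suppose that $\Gamma$ is not isomorphic to the complete multipartite graph $K_{m[b]}$ for any $m\ge3$ and $b\ge2$. Then either (i) $N$ has exactly $2$ orbits on $V(\Gamma)$ and $\Gamma$ is bipartite; or (ii) $N$ has at least $3$ orbits on $V(\Gamma)$, $N$ is semiregular on $V(\Gamma)$, $\Gamma$ is a cover of $\Gamma_N$, and $\Gamma_N$ is $(G/N,s')$-geodesic-transitive where $s'=\min\{s,\mathrm{diam}(\Gamma_N)\}$.
   Context: $K_{m[b]}$ is the complete multipartite graph with $m$ parts each of size $b$. An $s$-geodesic is a path $(v_0,\dots,v_s)$ with $d(v_0,v_s)=s$; $\Gamma$ is $(G,s)$-geodesic-transitive if it has an $s$-geodesic and $G$ is transitive on the set of $i$-geodesics for each $i\le s$. For $N\trianglelefteq G$, $\Gamma_N$ is the graph whose vertices are the $N$-orbits, two distinct orbits adjacent iff some edge of $\Gamma$ joins them; $G/N$ acts on $\Gamma_N$. $\Gamma$ is a cover of $\Gamma_N$ if for each edge $\{B,C\}$ of $\Gamma_N$ and $v\in B$, $v$ has exactly one neighbour in $C$. Semiregular means all point stabilisers in $N$ are trivial. *)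

(* Defs.v *)
From mathcomp Require Import all_boot all_fingroup.
Set Implicit Arguments. Unset Strict Implicit. Unset Printing Implicit Defensive.

(* A walk from v is given by the sequence p of the following vertices,
   with [path e v p]; its length is [size p] and it ends at [last v p]. *)

Section Graphs.
Variable V : finType.

Definition simple_graph (e : rel V) : Prop :=
  symmetric e /\ irreflexive e.

Definition dist_is (e : rel V) (x y : V) (n : nat) : Prop :=
  (exists p, [/\ path e x p, last x p = y & size p = n]) /\
  (forall p, path e x p -> last x p = y -> n <= size p).

Definition geodesic (e : rel V) (v : V) (p : seq V) : Prop :=
  path e v p /\ dist_is e v (last v p) (size p).

Definition diam_is (W : {set V}) (e : rel V) (d : nat) : Prop :=
  (exists x y, [/\ x \in W, y \in W & dist_is e x y d]) /\
  (forall x y n, x \in W -> y \in W -> dist_is e x y n -> n <= d).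

Definition geod_trans (aT : finGroupType) (W : {set V}) (e : rel V)
    (A : {set aT}) (act : aT -> V -> V) (s : nat) : Prop :=
  (exists v p, [/\ v \in W, size p = s & geodesic e v p]) /\
  (forall i, i <= s -> forall v p w q,
     v \in W -> w \in W -> size p = i -> size q = i ->
     geodesic e v p -> geodesic e w q ->
     exists2 g, g \in A & act g v = w /\ map (act g) p = q).

Definition bipartite (e : rel V) : Prop :=
  exists f : V -> bool, forall x y, e x y -> f x != f y.

End Graphs.

Definition Kmb (m b : nat) : rel ('I_m * 'I_b) :=
  fun x y => x.1 != y.1.

Definition graph_iso (V1 V2 : finType) (e1 : rel V1) (e2 : rel V2) : Prop :=
  exists h : V1 -> V2, bijective h /\ forall x y, e2 (h x) (h y) = e1 x y.

Definition orbs (T : finType) (N : {set {perm T}}) : {set {set T}} :=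
  [set orbit 'P N x | x in [set: T]].

Definition quot_rel (T : finType) (e : rel T) (N : {set {perm T}}) : rel {set T} :=
  fun B C => [&& B \in orbs N, C \in orbs N, B != C &
                [exists x in B, exists y in C, e x y]].

(* induced action of G (hence of G/N) on sets of vertices *)
Definition set_act (T : finType) (g : {perm T}) (B : {set T}) : {set T} :=
  [set g x | x in B].

Definition semiregular (T : finType) (N : {set {perm T}}) : Prop :=
  forall x : T, ('C_N[x | 'P] = 1)%g.

Definition is_cover (T : finType) (e : rel T) (N : {set {perm T}}) : Prop :=
  forall B C, quot_rel e N B C -> forall v, v \in B ->
    #|[set w in C | e v w]| = 1.

(* Main.v *)
Require Import Defs.
From mathcomp Require Import all_boot all_fingroup.
From Stdlib Require Import Classical.
Set Implicit Arguments. Unset Strict Implicit. Unset Printing Implicit Defensive.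

Lemma ex_minP' (P : nat -> Prop) :
  (exists n, P n) -> exists n, P n /\ forall m, P m -> n <= m.
Proof.
move=> [n Pn]; elim/ltn_ind: n Pn => n IH Pn.
case: (classic (exists m, P m /\ m < n)) => [[m [Pm lt]]|H]; first exact: IH m lt Pm.
exists n; split=> // m Pm; rewrite leqNgt; apply/negP => lt; apply: H; by exists m.
Qed.

Lemma ex_maxP' (P : nat -> Prop) M :
  (exists n, P n) -> (forall n, P n -> n <= M) ->
  exists d, P d /\ forall n, P n -> n <= d.
Proof.
move=> [n0 Pn0] HM.
have [k [Hk Hmin]] : exists k, (forall n, P n -> n <= k) /\
    forall m, (forall n, P n -> n <= m) -> k <= m.
  by apply: (@ex_minP' (fun k => forall n, P n -> n <= k)); exists M.
case: (classic (P k)) => Pk; first by exists k.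
exfalso; case: k Hk Hmin Pk => [|k] Hk Hmin Pk.
  by move: (Hk _ Pn0); rewrite leqn0 => /eqP E; rewrite E in Pn0.
have : k.+1 <= k; last by rewrite ltnn.
apply: Hmin => n Pn; have := Hk _ Pn; rewrite leq_eqVlt => /orP[/eqP E|//].
by rewrite E in Pn.
Qed.

Lemma path_ind (V : Type) (e : rel V) (P : V -> Prop) x p :
  P x -> (forall a b, P a -> e a b -> P b) -> path e x p -> P (last x p).
Proof.
elim: p x => //= y p IH x Px Hs /andP[exy Hp]; exact: IH (Hs _ _ Px exy) Hs Hp.
Qed.

Lemma conn_ind (V : finType) (e : rel V) (P : V -> Prop) x y :
  connect e x y -> P x -> (forall a b, P a -> e a b -> P b) -> P y.
Proof. by move=> /connectP[p Hp ->] Px Hs; apply: path_ind Hp. Qed.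

Lemma dist_ex (V : finType) (e : rel V) x y :
  connect e x y -> exists n, dist_is e x y n.
Proof.
move=> /connectP[p Hp Hl].
have [n [[q [Hq Hlq Hsq]] Hmin]] := @ex_minP'
   (fun n => exists q, [/\ path e x q, last x q = y & size q = n])
   (ex_intro _ (size p) (ex_intro (fun q => [/\ path e x q, last x q = y & size q = size p]) p (And3 Hp (esym Hl) erefl))).
exists n; split; first by exists q.
by move=> r Hr Hlr; apply: Hmin; exists r.
Qed.

Lemma dist_lt (V : finType) (e : rel V) x y n :
  dist_is e x y n -> n < #|V|.
Proof.
move=> [[p [Hp Hl Hs]] Hmin].
move: Hl; case: (shortenP Hp) => p' Hp' Hu _ Hl.
apply: (@leq_trans (size p').+1); first by rewrite ltnS; apply: Hmin.
by move/card_uniqP: Hu => /= <-; apply: max_card.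
Qed.

Lemma geo_prefix (V : finType) (e : rel V) v p1 p2 :
  geodesic e v (p1 ++ p2) -> geodesic e v p1.
Proof.
move=> [Hp [_ Hmin]]; move: Hp; rewrite cat_path => /andP[H1 H2].
split=> //; split; first by exists p1.
move=> r Hr Hl; have := Hmin (r ++ p2).
rewrite cat_path Hr /= Hl H2 !last_cat Hl !size_cat leq_add2r; exact.
Qed.

Lemma geo0 (V : finType) (e : rel V) x : geodesic e x [::].
Proof. by split=> //; split; [exists [::] | ]. Qed.

Lemma geo1 (V : finType) (e : rel V) x y :
  irreflexive e -> e x y -> geodesic e x [:: y].
Proof.
move=> irr exy; split; first by rewrite /= exy.
split; first by exists [:: y]; rewrite /= exy.
move=> [|a p] //= _ E; by rewrite /= E irr in exy.
Qed.

Lemma geo2 (V : finType) (e : rel V) a b c :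
  a != c -> ~~ e a c -> e a b -> e b c -> geodesic e a [:: b; c].
Proof.
move=> ac nac eab ebc; split; first by rewrite /= eab ebc.
split; first by exists [:: b; c]; rewrite /= eab ebc.
move=> [|y [|z p]] //=.
  by move=> _ E; rewrite E eqxx in ac.
by move=> /andP[H _] E; rewrite -E H in nac.
Qed.

Lemma orbP (T : finType) (N : {group {perm T}}) x y :
  reflect (exists2 n, n \in N & y = n x) (y \in orbit 'P N x).
Proof. by apply: (iffP imsetP) => [[n Hn ->]|[n Hn ->]]; exists n. Qed.

Lemma orb_eq (T : finType) (N : {group {perm T}}) x y :
  y \in orbit 'P N x -> orbit 'P N y = orbit 'P N x.
Proof. by move/orbit_eqP. Qed.

Lemma set_act_orb (T : finType) (G N : {group {perm T}}) g x :
  (N <| G)%g -> g \in G -> set_act g (orbit 'P N x) = orbit 'P N (g x).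
Proof.
move=> nG Gg; have nN := subsetP (normal_norm nG).
apply/setP => z; apply/imsetP/orbP.
- case=> y /orbP [n Nn ->] ->; exists (n ^ g)%g.
    by rewrite memJ_norm ?nN.
  by rewrite conjgE !permM permK.
- case=> n Nn ->; exists ((n ^ g^-1)%g x).
    by apply/orbP; exists (n ^ g^-1)%g => //; rewrite memJ_norm ?nN ?groupV.
  by rewrite conjgE invgK !permM permKV.
Qed.

Lemma card_orb (T : finType) (G N : {group {perm T}}) g x :
  (N <| G)%g -> g \in G -> #|orbit 'P N (g x)| = #|orbit 'P N x|.
Proof.
move=> nG Gg; rewrite -(set_act_orb _ nG Gg) /set_act card_imset //; exact: perm_inj.
Qed.

Lemma orbs_mem (T : finType) (N : {group {perm T}}) x : orbit 'P N x \in orbs N.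
Proof. by apply: imset_f; rewrite inE. Qed.

Theorem lemma3p2 (T : finType) (e : rel T) (G N : {group {perm T}}) (s : nat) :
  simple_graph e ->
  (forall x y, connect e x y) ->
  (forall g, g \in G -> forall x y, e (g x) (g y) = e x y) ->
  2 <= s ->
  geod_trans [set: T] e G (fun g x => g x) s ->
  (N :!=: 1)%g -> (N <| G)%g ->
  ~ [transitive N, on [set: T] | 'P] ->
  (forall m b, 3 <= m -> 2 <= b -> ~ graph_iso e (@Kmb m b)) ->
  (#|orbs N| = 2 /\ bipartite e) \/
  [/\ 3 <= #|orbs N|, semiregular N, is_cover e N &
      exists d, diam_is (orbs N) (quot_rel e N) d /\
        geod_trans (orbs N) (quot_rel e N) G (@set_act T) (minn s d)].
Proof.
move=> [esy eirr] conn aut s2 [[v0 [p0 [_ Hs0 Hg0]]] Htr] N1 nG ntr noK.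
have eS : forall x y, e x y -> e y x by move=> x y; rewrite esy.
have NG : forall n, n \in N -> n \in G := subsetP (normal_sub nG).
have Gtr0 : forall x y, exists2 g, g \in G & g x = y.
  move=> x y; have [g Gg [E _]] := Htr 0 (leq0n _) x [::] y [::]
    (in_setT _) (in_setT _) erefl erefl (@geo0 _ _ _) (@geo0 _ _ _).
  by exists g.
have Htr1 : forall x y u w, e x y -> e u w ->
    exists2 g, g \in G & g x = u /\ g y = w.
  move=> x y u w exy euw.
  have [g Gg [E1 /= [E2]]] := Htr 1 (ltnW s2) x [:: y] u [:: w]
    (in_setT _) (in_setT _) erefl erefl (geo1 eirr exy) (geo1 eirr euw).
  by exists g.
have alltr : forall x, ~ (forall z, orbit 'P N z = orbit 'P N x).
  move=> x H; apply: ntr; apply/imsetP; exists x => //.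
  apply/setP => z; by rewrite in_setT -(H z) orbit_refl.
have noin : forall x y, e x y -> orbit 'P N y != orbit 'P N x.
  move=> x y exy; apply/negP => /eqP Exy.
  have H : forall u w, e u w -> orbit 'P N w = orbit 'P N u.
    move=> u w euw; have [g Gg [<- <-]] := Htr1 _ _ _ _ exy euw.
    by rewrite -!(set_act_orb _ nG Gg) Exy.
  apply: (alltr x) => z.
  apply: (@conn_ind _ e (fun z => orbit (perm_action T) N z = orbit (perm_action T) N x) x z (conn x z)) => // a b Ha eab; by rewrite (H _ _ eab).
have norb2 : 2 <= #|orbs N|.
  rewrite ltnNge; apply/negP => /card_le1_eqP H.
  apply: (alltr v0) => z; exact: H (orbs_mem _ _) (orbs_mem _ _).
case: (ltngtP #|orbs N| 2) => [|Horb|Horb].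
- by rewrite ltnNge norb2.
- idtac.
case: (classic (exists v u w, [/\ e v u, e v w,
   orbit 'P N u = orbit 'P N w & u != w])) => [[v [u [w [evu evw Euw nuw]]]] | nA].
  exfalso.
  have D2 : forall a b c, a != c -> ~~ e a c -> e a b -> e b c ->
      orbit 'P N a = orbit 'P N c.
    move=> a b c nac neac eab ebc.
    have nuw' : ~~ e u w.
      by apply/negP => euw; have := noin _ _ euw; rewrite Euw eqxx.
    have [g Gg [Eu /= [Ev Ew]]] := Htr 2 s2 u [:: v; w] a [:: b; c]
      (in_setT _) (in_setT _) erefl erefl
      (geo2 nuw nuw' (eS _ _ evu) evw) (geo2 nac neac eab ebc).
    by rewrite -Eu -Ew -!(set_act_orb _ nG Gg) Euw.
  have A2 : forall x y, e x y -> exists2 q, e x q & orbit 'P N q != orbit 'P N y.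
    move=> x y exy; apply: NNPP => nq.
    have H : forall q, e x q -> orbit 'P N q = orbit 'P N y.
      move=> q exq; apply: NNPP => nE; apply: nq; exists q => //; exact/eqP.
    have H2 : forall z, exists C, forall t, e z t -> orbit 'P N t = C.
      move=> z; have [g Gg gz] := Gtr0 x z; exists (orbit 'P N (g y)) => t ezt.
      have ext : e x ((g^-1)%g t) by rewrite -(aut _ Gg) permKV gz.
      rewrite -[t](permKV g) -(set_act_orb _ nG Gg) (H _ ext).
      exact: (set_act_orb _ nG Gg).
    have Inv : forall z,
       (orbit 'P N z = orbit 'P N x /\ forall t, e z t -> orbit 'P N t = orbit 'P N y)
    \/ (orbit 'P N z = orbit 'P N y /\ forall t, e z t -> orbit 'P N t = orbit 'P N x).
      move=> z; apply: (@conn_ind _ e (fun z =>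
       (orbit 'P N z = orbit 'P N x /\ forall t, e z t -> orbit 'P N t = orbit 'P N y)
    \/ (orbit 'P N z = orbit 'P N y /\ forall t, e z t -> orbit 'P N t = orbit 'P N x))
         x z (conn x z)).
      - by left; split=> // t ext; rewrite (H _ ext).
      - move=> a b [[Ea Ha]|[Ea Ha]] eab; have [Cb HCb] := H2 b;
          have eba : e b a by rewrite esy.
        + right; split; first exact: Ha.
          by move=> t ebt; rewrite (HCb _ ebt) -(HCb _ eba) Ea.
        + left; split; first exact: Ha.
          by move=> t ebt; rewrite (HCb _ ebt) -(HCb _ eba) Ea.
    have : #|orbs N| <= 2.
      apply: (leq_trans (subset_leq_card
          (_ : orbs N \subset orbit 'P N x |: [set orbit 'P N y]))).
        apply/subsetP => Bz /imsetP[z _ ->]; rewrite !inE.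
        by case: (Inv z) => [[-> _]|[-> _]]; rewrite eqxx ?orbT.
      by rewrite cardsU1 cards1; case: (_ \notin _).
    by rewrite leqNgt Horb.
  have A3 : forall x y, orbit 'P N x != orbit 'P N y -> e x y.
    move=> x y nxy; apply/idPn => nexy.
    have xy : x != y by apply: contraNneq nxy => ->.
    have [n [[p [Hp Hl Hs]] Hmin]] := dist_ex (conn x y).
    have geo : geodesic e x p.
      split=> //; rewrite Hl Hs; split=> //; by exists p.
    move: Hp Hl geo; clear Hs Hmin; case: p => [|p1 [|p2 [|p3 rest]]] /=.
    - by move=> _ E; rewrite E eqxx in xy.
    - by move=> /andP[exp1 _] E; rewrite -E exp1 in nexy.
    - move=> /and3P[exp1 ep12 _] E _; move: nxy.
      by rewrite (D2 x p1 y xy nexy exp1) ?eqxx // -E.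
    move=> /and4P[ex1 e12 e23 Hrest] E geo.
    have g3 : geodesic e x [:: p1; p2; p3] := @geo_prefix _ e x [:: p1; p2; p3] rest geo.
    case: g3 => _ [_ /= min3].
    have nx2 : x != p2.
      apply/eqP => E2; have := min3 [:: p3]; rewrite /= E2 e23.
      by move=> /(_ isT erefl).
    have nx2e : ~~ e x p2.
      apply/negP => ex2; have := min3 [:: p2; p3]; rewrite /= ex2 e23.
      by move=> /(_ isT erefl).
    have n13 : p1 != p3.
      apply/eqP => E13; have := min3 [:: p1]; rewrite /= ex1.
      by move=> /(_ isT E13).
    have n13e : ~~ e p1 p3.
      apply/negP => e13; have := min3 [:: p1; p3]; rewrite /= ex1 e13.
      by move=> /(_ isT erefl).
    have O02 := D2 x p1 p2 nx2 nx2e ex1 e12.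
    have O13 := D2 p1 p2 p3 n13 n13e e12 e23.
    have [q e1q nq] := A2 p1 x (eS _ _ ex1).
    have exq : e x q.
      apply/idPn => nexq.
      have xq : x != q by apply: contraNneq nq => <-.
      by move: nq; rewrite (D2 x p1 q xq nexq ex1 e1q) eqxx.
    have eq2 : e q p2.
      apply/idPn => n2.
      have q2 : q != p2 by apply: contraNneq nq => ->; rewrite O02.
      by move: nq; rewrite (D2 q p1 p2 q2 n2 (eS _ _ e1q) e12) -O02 eqxx.
    have nq1 : orbit 'P N q != orbit 'P N p1 := noin _ _ e1q.
    case e3: (e q p3).
      by have := min3 [:: q; p3]; rewrite /= exq e3 => /(_ isT erefl).
    have q3 : q != p3 by apply: contraNneq nq1 => ->; rewrite O13.
    by move: nq1; rewrite (D2 q p2 p3 q3 (negbT e3) eq2 e23) -O13 eqxx.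
  pose b := #|orbit 'P N v0|.
  have Hb : forall x, #|orbit 'P N x| = b.
    by move=> x; have [g Gg <-] := Gtr0 v0 x; exact: (card_orb _ nG Gg).
  have b2 : 1 < b.
    rewrite -(Hb u); apply/card_gt1P; exists u, w; split=> //.
      exact: orbit_refl.
    by rewrite Euw orbit_refl.
  have b0 : 0 < b by exact: ltnW.
  have eE : forall x y, e x y = (orbit 'P N x != orbit 'P N y).
    move=> x y; apply/idP/idP => [exy|]; [by rewrite eq_sym noin | exact: A3].
  apply: (noK #|orbs N| b Horb b2).
  have Hv := orbs_mem N v0.
  pose j0 : 'I_b := Ordinal b0.
  pose h := fun x => (enum_rank_in Hv (orbit 'P N x),
                      insubd j0 (index x (enum (orbit 'P N x)))).
  pose k := fun ij : 'I_#|orbs N| * 'I_b =>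
              nth v0 (enum (enum_val ij.1)) ij.2.
  exists h; split.
    exists k.
      move=> x; rewrite /k /h /= enum_rankK_in ?orbs_mem // val_insubd.
      have xin : x \in enum (orbit 'P N x) by rewrite mem_enum orbit_refl.
      have -> : index x (enum (orbit 'P N x)) < b.
        by rewrite -(Hb x) cardE index_mem.
      exact: nth_index.
    move=> [i j]; rewrite /h /k /=.
    set B := enum_val i.
    have HB : B \in orbs N := enum_valP i.
    have [z _ EB] := imsetP HB.
    have cB : #|B| = b by rewrite EB Hb.
    set y := nth v0 (enum B) j.
    have yB : y \in B by rewrite -mem_enum mem_nth // -cardE cB.
    have Oy : orbit 'P N y = B.
      by rewrite EB; apply: orb_eq; rewrite -EB.
    rewrite Oy /B enum_valK_in /y index_uniq ?enum_uniq ?valKd //.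
    by rewrite -cardE cB.
  move=> x y; rewrite /Kmb /h /= eE; congr negb; apply/eqP/eqP => [E|->//].
  by have := congr1 enum_val E; rewrite !enum_rankK_in ?orbs_mem.
have HB : forall v u w, e v u -> e v w -> orbit 'P N u = orbit 'P N w -> u = w.
  move=> v u w evu evw E; apply: NNPP => nuw; apply: nA; exists v, u, w.
  by split=> //; apply/eqP.
right; split => //.
- move=> x; apply/trivgP/subsetP => n; rewrite inE => /andP[Nn /astab1P nx].
  apply/set1P/permP => y; rewrite perm1.
  apply: (@conn_ind _ e (fun y => n y = y) x y (conn x y)) => // a c Ha eac.
  apply: (HB a) => //.
    by rewrite -{1}Ha aut ?NG.
  by apply: orb_eq; apply/orbP; exists n.
- move=> B C /and4P[HBo HCo nBC /existsP[a /andP[aB /existsP[c /andP[cC eac]]]]] v vB.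
  have [zb _ EB] := imsetP HBo; have [zc _ EC] := imsetP HCo.
  have Ea : orbit 'P N a = B by rewrite EB; apply: orb_eq; rewrite -EB.
  have Ec : orbit 'P N c = C by rewrite EC; apply: orb_eq; rewrite -EC.
  have [n Nn Ev] : exists2 n, n \in N & v = n a by apply/orbP; rewrite Ea.
  rewrite Ev; apply/eqP/cards1P; exists (n c); apply/setP => w; rewrite !inE.
  apply/andP/eqP => [[wC ew]|->].
    apply: (HB (n a)) => //; first by rewrite aut ?NG.
    rewrite -Ec in wC; rewrite (orb_eq wC).
    by apply: esym; apply: orb_eq; apply/orbP; exists n.
  split; last by rewrite aut ?NG.
  have Hnc : n c \in orbit (perm_action T) N c by apply/orbP; exists n.
  by rewrite Ec in Hnc.
have proj : forall x r, path e x r ->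
    path (quot_rel e N) (orbit 'P N x) (map (orbit 'P N) r).
  move=> x r; elim: r x => //= y r IH x /andP[exy Hr]; rewrite IH // andbT.
  rewrite /quot_rel !orbs_mem /= eq_sym noin //=.
  apply/existsP; exists x; rewrite orbit_refl /=.
  by apply/existsP; exists y; rewrite orbit_refl exy.
have lift : forall p x, path (quot_rel e N) (orbit 'P N x) p ->
    exists2 p', path e x p' & map (orbit 'P N) p' = p.
  elim=> [|C p IH] x /=; first by exists [::].
  case/andP => /and4P[_ HC _ /existsP[a /andP[aB /existsP[c /andP[cC eac]]]]] Hp.
  have [n Nn Ea] : exists2 n, n \in N & a = n x by apply/orbP.
  have Gi : (n^-1)%g \in G by rewrite groupV NG.
  pose y := (n^-1)%g c.
  have exy : e x y by rewrite /y -[x](permK n) -Ea (aut _ Gi).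
  have EC : orbit 'P N y = C.
    have [z _ EC'] := imsetP HC.
    have yc : y \in orbit 'P N c by apply/orbP; exists (n^-1)%g; rewrite ?groupV.
    rewrite (orb_eq yc) EC'; apply: orb_eq; by rewrite -EC'.
  have [p' Hp' Ep'] : exists2 p', path e y p' & map (orbit 'P N) p' = p.
    by apply: IH; rewrite EC.
  by exists (y :: p'); rewrite /= ?exy ?Hp' ?EC ?Ep'.
have liftg : forall x p, geodesic (quot_rel e N) (orbit 'P N x) p ->
    exists2 p', geodesic e x p' & map (orbit 'P N) p' = p.
  move=> x p [Hp [_ Hmin]]; have [p' Hp' Ep] := lift p x Hp; exists p' => //.
  split=> //; split; first by exists p'.
  move=> r Hr Hl; have := Hmin (map (orbit 'P N) r) (proj _ _ Hr).
  by rewrite -Ep !last_map Hl !size_map => /(_ erefl).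
have Hv := orbs_mem N v0.
have Hdist : forall B C, B \in orbs N -> C \in orbs N ->
    exists n, dist_is (quot_rel e N) B C n.
  move=> B C /imsetP[x _ ->] /imsetP[y _ ->]; apply: dist_ex; apply/connectP.
  have /connectP[r Hr Hl] := conn x y; exists (map (orbit 'P N) r).
    exact: proj.
  by rewrite Hl last_map.
have [d [[B [C [HB' HC' Dd]]] Hd]] := @ex_maxP'
   (fun n => exists B C, [/\ B \in orbs N, C \in orbs N &
               dist_is (quot_rel e N) B C n]) #|{set T}|
   (let: ex_intro n Dn := Hdist _ _ Hv Hv in
    ex_intro _ n (ex_intro _ _ (ex_intro _ _ (And3 Hv Hv Dn))))
   (fun n '(ex_intro B (ex_intro C (And3 _ _ Dn))) => ltnW (dist_lt Dn)).
exists d; split.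
  split; first by exists B, C.
  by move=> x y n Hx Hy Dn; apply: Hd; exists x, y.
split.
  case: (Dd) => [[r [Hr Hl Hs]] Hmin].
  have gr : geodesic (quot_rel e N) B r by split=> //; rewrite Hl Hs.
  exists B, (take (minn s d) r); split=> //.
    by rewrite size_takel // Hs geq_minr.
  apply: (@geo_prefix _ _ B _ (drop (minn s d) r)); by rewrite cat_take_drop.
move=> i Hi B1 p C1 q HB1 HC1 Hsp Hsq gp gq.
have [x _ EB1] := imsetP HB1; have [y _ EC1] := imsetP HC1.
rewrite EB1 in gp; rewrite EC1 in gq.
have [p' gp' Ep] := liftg _ _ gp; have [q' gq' Eq] := liftg _ _ gq.
have [g Gg [gx gq'']] := Htr i (leq_trans Hi (geq_minl _ _)) x p' y q'
  (in_setT _) (in_setT _) (etrans (esym (size_map (orbit 'P N) p')) (etrans (f_equal size Ep) Hsp))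
  (etrans (esym (size_map (orbit 'P N) q')) (etrans (f_equal size Eq) Hsq)) gp' gq'.
exists g => //; split; first by rewrite EB1 EC1 (set_act_orb _ nG Gg) gx.
rewrite -Ep -Eq -gq'' -!map_comp; apply: eq_map => z /=; exact: (set_act_orb _ nG Gg).
left; split=> //; exists (fun x => orbit 'P N x == orbit 'P N v0) => x y exy.
have nxy := noin _ _ exy.
case: (orbit (perm_action T) N x =P orbit (perm_action T) N v0) => Hx; case: (orbit (perm_action T) N y =P orbit (perm_action T) N v0) => Hy //=; first by rewrite Hx Hy eqxx in nxy.
have : #|orbit 'P N v0 |: (orbit 'P N x |: [set orbit 'P N y])| <= #|orbs N|.
  apply: subset_leq_card; apply/subsetP => B; rewrite !inE.
  by case/or3P => /eqP ->; apply: orbs_mem.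
have E1 : (orbit 'P N x == orbit 'P N y) = false by rewrite eq_sym (negbTE nxy).
have E2 : (orbit 'P N v0 == orbit 'P N x) = false by apply/eqP => E; apply: Hx.
have E3 : (orbit 'P N v0 == orbit 'P N y) = false by apply/eqP => E; apply: Hy.
by rewrite Horb !cardsU1 cards1 !inE E1 E2 E3.
Qed.
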